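(* Let $n\in\mathbb{N}$ and for $c\in\mathbb{R}$ let $D_{2n}(z;c) = \prod_{j=1}^{2n}[z-(j-1)] + (-1)^n c$, $z\in\mathbb{C}$, with roots $\alpha_1(c),\dots,\alpha_{2n}(c)$ (with multiplicity). Write \[ D_{2n}(z-(1/2);c) = q_{2n}z^{2n}+q_{2n-1}z^{2n-1}+\cdots+q_1 z + [q_0+(-1)^n c], \] so that $q_0 = (4n-1)!!/2^{2n}$. Let $a_k=q_k$ for $1\leq k\leq 2n$, $a_0 = q_0+(-1)^nc$, and $a_k=0$ for $k<0$ or $k>2n$, and let $H_{2n}(c)$ be the $2n\times 2n$ Hurwitz matrix with entries $(H_{2n}(c))_{i,j} = a_{2n-2j+i}$, $1\leq i,j\leq 2n$. Let $h_{n-1}(c)$ be the determinant of the upper-left $(2n-1)\times(2n-1)$ submatrix of $H_{2n}(c)$, so that $\det(H_{2n}(c)) = [q_0+(-1)^nc]\,h_{n-1}(c)$. If $j\in\{1,\dots,2n\}$ and $c\in\mathbb{R}$ are such that $\Re(\alpha_j(c))=-1/2$, then $\det(H_{2n}(c))=0$, that is, $c=(-1)^{n-1}q_0$ or $h_{n-1}(c)=0$.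
   Context: $h_{n-1}$ is a polynomial in $c$ of degree $n-1$ with rational coefficients, and $\det(H_{2n}(\cdot))$ is a polynomial in $c$ of degree $n$. *)

(* Defs.v *)
From HB Require Import structures.
From mathcomp Require Import all_boot all_order all_algebra.
From mathcomp Require Import complex.
Set Implicit Arguments. Unset Strict Implicit. Unset Printing Implicit Defensive.
Import Order.TTheory GRing.Theory Num.Theory.
Local Open Scope ring_scope.

Definition Dpoly (F : comNzRingType) (n : nat) (c : F) : {poly F} :=
  \prod_(j < 2 * n) ('X - (j%:R)%:P) + ((-1) ^+ n * c)%:P.

Definition Dshift (F : fieldType) (n : nat) (c : F) : {poly F} :=
  Dpoly n c \Po ('X - (2%:R^-1)%:P).

Definition q0 (F : fieldType) (n : nat) : F := (Dshift n 0)`_0.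

Definition hcoef (F : fieldType) (n : nat) (c : F) (k : int) : F :=
  match k with
  | Posz m => if (m <= 2 * n)%N then (Dshift n c)`_m else 0
  | Negz _ => 0
  end.

(* the k x k upper-left block of the Hurwitz matrix with (1-based) entries
   a_{2n - 2j + i}; written with 0-based indices i, j *)
Definition hurwitz_block (F : fieldType) (n : nat) (c : F) (k : nat) : 'M[F]_k :=
  \matrix_(i < k, j < k)
     hcoef n c ((2 * n)%:Z - 2%:Z * (j.+1)%:Z + (i.+1)%:Z).

Definition H2n (F : fieldType) (n : nat) (c : F) : 'M[F]_(2 * n) :=
  hurwitz_block n c (2 * n).

Definition hn1 (F : fieldType) (n : nat) (c : F) : F :=
  \det (hurwitz_block n c (2 * n).-1).

(* Main.v *)
Require Import Defs.
From HB Require Import structures.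
From mathcomp Require Import all_boot all_order all_algebra.
From mathcomp Require Import complex zify ring.
Import Order.TTheory GRing.Theory Num.Theory.
Local Open Scope ring_scope.

Section Gen.
Variable F : comNzRingType.

Lemma sum_ext0 (f : nat -> F) N M : (N <= M)%N -> (forall k, (N <= k)%N -> f k = 0) ->
  \sum_(k < M) f k = \sum_(k < N) f k.
Proof.
move=> NM h; rewrite -!(big_mkord xpredT) (big_cat_nat (leq0n N) NM) /=.
rewrite [X in _ + X]big1_seq ?addr0 // => k /andP[_]; rewrite mem_index_iota => /andP[+ _].
exact: h.
Qed.

Lemma sum_ext (f : nat -> F) N M1 M2 : (N <= M1)%N -> (N <= M2)%N ->
  (forall k, (N <= k)%N -> f k = 0) ->
  \sum_(k < M1) f k = \sum_(k < M2) f k.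
Proof. by move=> h1 h2 h; rewrite (@sum_ext0 f N M1) // (@sum_ext0 f N M2). Qed.

Variable A : int -> F.
Hypothesis hA : forall z : int, z < 0 -> A z = 0.

Lemma congrA x y : x = y -> A x = A y. Proof. by move->. Qed.

Lemma sum_even (t : F) M r :
  \sum_(m < M + r) A ((2 * m)%:Z - (2 * r)%:Z) * t ^+ m =
  t ^+ r * \sum_(k < M) A ((2 * k)%:Z) * t ^+ k.
Proof.
elim: r => [|r IH].
  rewrite addn0 expr0 mul1r; apply: eq_bigr => i _; congr (_ * _); f_equal; (try rewrite /bump leq0n add1n); lia.
rewrite addnS big_ord_recl /= hA; last by lia.
rewrite mul0r add0r exprS -mulrA -IH mulr_sumr; apply: eq_bigr => i _.
rewrite exprS mulrCA; congr (_ * (_ * _)); f_equal; (try rewrite /bump leq0n add1n); lia.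
Qed.

Lemma sum_odd (t : F) M r :
  \sum_(m < M + r.+1) A ((2 * m)%:Z - (2 * r + 1)%:Z) * t ^+ m =
  t ^+ r.+1 * \sum_(k < M) A ((2 * k + 1)%:Z) * t ^+ k.
Proof.
elim: r => [|r IH].
  rewrite addn1 big_ord_recl /= hA; last by lia.
  rewrite mul0r add0r expr1 mulr_sumr; apply: eq_bigr => i _.
  rewrite exprS mulrCA; congr (_ * (_ * _)); f_equal; (try rewrite /bump leq0n add1n); lia.
rewrite addnS big_ord_recl /= hA; last by lia.
rewrite mul0r add0r exprS -mulrA -IH mulr_sumr; apply: eq_bigr => i _.
rewrite exprS mulrCA; congr (_ * (_ * _)); f_equal; (try rewrite /bump leq0n add1n); lia.
Qed.

Lemma sum_split (f : nat -> F) N :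
  \sum_(k < (2 * N)%N) f k = \sum_(k < N) f (2 * k)%N + \sum_(k < N) f (2 * k + 1)%N.
Proof.
elim: N => [|N IH]; first by rewrite !big_ord0 addr0.
have -> : (2 * N.+1 = (2 * N).+2)%N by lia.
rewrite !big_ord_recr /= IH -!addrA; congr (_ + _); rewrite addrC -!addrA; congr (_ + _).
by rewrite addrC addn1.
Qed.
End Gen.
Section Hur.
Variable F : fieldType.
Variables (n : nat) (c : F).
Local Notation A := (hcoef n c).

Lemma hA : forall z : int, z < 0 -> A z = 0. Proof. by case. Qed.

Definition Ev (t : F) := \sum_(k < n.+1) A (2 * k)%:Z * t ^+ k.
Definition Od (t : F) := \sum_(k < n) A (2 * k + 1)%:Z * t ^+ k.

Lemma sum_even' (t : F) M r N : N = (M + r)%N ->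
  \sum_(m < N) A ((2 * m)%:Z - (2 * r)%:Z) * t ^+ m =
  t ^+ r * \sum_(k < M) A ((2 * k)%:Z) * t ^+ k.
Proof. by move->; apply: sum_even; apply: hA. Qed.

Lemma sum_odd' (t : F) M r N : N = (M + r.+1)%N ->
  \sum_(m < N) A ((2 * m)%:Z - (2 * r + 1)%:Z) * t ^+ m =
  t ^+ r.+1 * \sum_(k < M) A ((2 * k + 1)%:Z) * t ^+ k.
Proof. by move->; apply: sum_odd; apply: hA. Qed.

Lemma row_zero (t : F) i : (i < 2 * n)%N -> Ev t = 0 -> t * Od t = 0 ->
  \sum_(j < 2 * n) A ((2 * n)%:Z - 2%:Z * (j.+1)%:Z + (i.+1)%:Z) * t ^+ (2 * n - 1 - j) = 0.
Proof.
move=> hi hE hO.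
rewrite -(big_mkord xpredT (fun j => A ((2 * n)%:Z - 2%:Z * (j.+1)%:Z + (i.+1)%:Z) * t ^+ (2 * n - 1 - j))).
rewrite big_rev_mkord subn0.
have [r [hr|hr]] : exists r, (2 * n - 1 - i = 2 * r \/ 2 * n - 1 - i = 2 * r + 1)%N.
  exists (2 * n - 1 - i)./2; move: (odd_double_half (2 * n - 1 - i)).
  by case: (odd _) => /= h; [right|left]; lia.
- rewrite (eq_bigr (fun k : 'I_(2 * n) => A ((2 * k)%:Z - (2 * r)%:Z) * t ^+ k)); last first.
    move=> k _; have hk := ltn_ord k.
    rewrite (_ : (2 * n - 1 - (2 * n - k.+1) = k)%N); last by lia.
    congr (_ * _); f_equal; lia.
  rewrite (@sum_even' t (2 * n - r) r); last by lia.
  rewrite (@sum_ext _ (fun k => A (2 * k)%:Z * t ^+ k) n.+1 _ n.+1); first by move: hE; rewrite /Ev /= => ->; rewrite mulr0.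
  + lia.
  + by [].
  + move=> k hk /=; case: ifP => [h|_]; [lia | by rewrite mul0r].
- rewrite (eq_bigr (fun k : 'I_(2 * n) => A ((2 * k)%:Z - (2 * r + 1)%:Z) * t ^+ k)); last first.
    move=> k _; have hk := ltn_ord k.
    rewrite (_ : (2 * n - 1 - (2 * n - k.+1) = k)%N); last by lia.
    congr (_ * _); f_equal; lia.
  rewrite (@sum_odd' t (2 * n - r - 1) r); last by lia.
  rewrite (@sum_ext _ (fun k => A (2 * k + 1)%:Z * t ^+ k) n _ n).
  + by move: hO; rewrite /Od /= exprSr -mulrA => ->; rewrite mulr0.
  + lia.
  + by [].
  + move=> k hk /=; case: ifP => [h|_]; [lia | by rewrite mul0r].
Qed.
End Hur.
Lemma det_kernel (F : fieldType) k (M : 'M[F]_k) (v : 'cV_k) :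
  v != 0 -> M *m v = 0 -> \det M = 0.
Proof.
move=> hv hM; rewrite -det_tr; apply/eqP/det0P; exists v^T.
  by rewrite trmx_eq0.
by rewrite -trmx_mul hM trmx0.
Qed.

Lemma drop_last (F : comNzRingType) (f : nat -> F) K : f K = 0 ->
  \sum_(j < K.+1) f j = \sum_(j < K) f j.
Proof. by move=> h; rewrite big_ord_recr /= h addr0. Qed.

Section Hur2.
Variable F : fieldType.
Variables (n : nat) (c : F).
Hypothesis n0 : (0 < n)%N.

Lemma detH_zero t : @Ev _ n c t = 0 -> t * @Od _ n c t = 0 -> \det (H2n n c) = 0.
Proof.
move=> hE hO.
pose v : 'cV[F]_(2 * n) := \col_(j < 2 * n) t ^+ (2 * n - 1 - j).
apply: (@det_kernel _ _ _ v).
  have hl : (2 * n - 1 < 2 * n)%N by lia.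
  apply/eqP => /matrixP /(_ (Ordinal hl) 0); rewrite !mxE /= subnn expr0 => /eqP.
  by rewrite oner_eq0.
apply/matrixP => i j; rewrite !mxE.
under eq_bigr do rewrite !mxE.
by rewrite (@row_zero _ n c t i (ltn_ord i) hE hO).
Qed.

Lemma hn1_zero t : t != 0 -> @Ev _ n c t = 0 -> t * @Od _ n c t = 0 -> hn1 n c = 0.
Proof.
move=> t0 hE hO.
pose v : 'cV[F]_((2 * n).-1) := \col_(j < (2 * n).-1) t ^+ (2 * n - 1 - j).
apply: (@det_kernel _ _ _ v).
  have hl : (0 < (2 * n).-1)%N by lia.
  apply/eqP => /matrixP /(_ (Ordinal hl) 0); rewrite !mxE /= => /eqP.
  by rewrite expf_eq0 (negbTE t0) andbF.
apply/matrixP => i j; rewrite !mxE.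
under eq_bigr do rewrite !mxE.
have hi : (i < 2 * n)%N by have := ltn_ord i; lia.
rewrite -(@drop_last _ (fun j => hcoef n c ((2 * n)%:Z - 2%:Z * (j.+1)%:Z + (i.+1)%:Z) * t ^+ (2 * n - 1 - j))).
  by rewrite prednK ?muln_gt0 //= (@row_zero _ n c t i hi hE hO).
rewrite hA ?mul0r //; have := ltn_ord i; lia.
Qed.
End Hur2.
Section Main.
Variable R : rcfType.
Variables (n : nat) (c : R).
Local Open Scope complex_scope.

Lemma Dmap : map_poly (real_complex R) (Dpoly n c) = Dpoly n c%:C.
Proof.
rewrite /Dpoly rmorphD rmorph_prod /= map_polyC /= rmorphM rmorphXn rmorphN1.
congr (_ + _); apply: eq_bigr => j _.
by rewrite rmorphB /= map_polyX map_polyC /= rmorph_nat.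
Qed.

Lemma size_Dshift : (size (Dshift n c) <= (2 * n).+1)%N.
Proof.
rewrite /Dshift; apply: leq_trans (size_comp_poly_leq _ _) _.
rewrite size_XsubC /= muln1.
have : (size (Dpoly n c) <= (2 * n).+1)%N.
  rewrite /Dpoly; apply: leq_trans (size_polyD _ _) _.
  rewrite geq_max size_prod_XsubC /index_enum -enumT size_enum_ord leqnn /=.
  by apply: leq_trans (size_polyC_leq1 _) _.
by case: (size _).
Qed.
End Main.
Arguments Ev {F}.
Arguments Od {F}.
Section Main2.
Variable R : rcfType.
Variables (n : nat) (c : R).
Local Open Scope complex_scope.

Lemma hcoef_coef k : hcoef n c (Posz k) = (Dshift n c)`_k.
Proof.
rewrite /=; case: ifP => // h; rewrite nth_default //.
apply: leq_trans (size_Dshift _ n c) _; lia.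
Qed.

Lemma root_eval (z : R[i]) : root (Dpoly n c%:C) z -> complex.Re z = - 2%:R^-1 ->
  Ev n c (- (complex.Im z * complex.Im z)) = 0 /\ complex.Im z * Od n c (- (complex.Im z * complex.Im z)) = 0.
Proof.
move=> hr hre.
have hz : z = Complex 0 (complex.Im z) - (2%:R^-1)%:C.
  case: z hre {hr} => a b /= ->.
  apply/eqP; rewrite eq_complex /= add0r oppr0 addr0 !eqxx //.
set y := complex.Im z in hz *; set t := - (y * y).
pose w : R[i] := Complex 0 y.
rewrite -/w in hz.
have hpw : (map_poly (real_complex R) (Dshift n c)).[w] = 0.
  rewrite /Dshift map_comp_poly horner_comp Dmap rmorphB /= map_polyX map_polyC /=.
  by rewrite hornerXsubC -hz; apply/eqP.
have hw2 k : w ^+ (2 * k) = (t ^+ k)%:C.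
  rewrite exprM rmorphXn /=; congr (_ ^+ _).
  rewrite expr2 /w /t; apply/eqP; rewrite eq_complex /=.
  by rewrite !mul0r !mulr0 sub0r addr0 !eqxx.
have hsz : (size (map_poly (real_complex R) (Dshift n c)) <= 2 * n.+1)%N.
  by rewrite size_map_poly; apply: leq_trans (size_Dshift _ n c) _; lia.
move: hpw; rewrite (horner_coef_wide _ hsz).
rewrite (eq_bigr (fun k : 'I_(2 * n.+1) => (hcoef n c k)%:C * w ^+ k)); last first.
  by move=> k _; rewrite coef_map hcoef_coef.
rewrite (sum_split _ (fun k => (hcoef n c k)%:C * w ^+ k)).
rewrite (eq_bigr (fun k : 'I_n.+1 => (hcoef n c (2 * k)%N * t ^+ k)%:C)); last first.
  by move=> k _; rewrite hw2 rmorphM.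
rewrite [X in _ + X](eq_bigr (fun k : 'I_n.+1 => (hcoef n c (2 * k + 1)%N * t ^+ k)%:C * w)); last first.
  by move=> k _; rewrite exprD expr1 hw2 rmorphM mulrA.
rewrite -mulr_suml -!rmorph_sum /=.
rewrite (@sum_ext _ (fun k => hcoef n c (2 * k + 1)%N * t ^+ k) n n.+1 n) //; last first.
  move=> k hk /=; case: ifP => [h|_]; [lia | by rewrite mul0r].
rewrite -/(Ev n c t) -/(Od n c t).
rewrite /w; move: (Ev n c t) (Od n c t) => e o.
move/eqP; rewrite eq_complex /= => /andP[/eqP h1 /eqP h2].
split.
  by rewrite -h1; ring.
by rewrite -h2; ring.
Qed.
End Main2.
Lemma Dshift_coef0 (F : fieldType) n (c : F) : (Dshift n c)`_0 = q0 F n + (-1) ^+ n * c.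
Proof.
by rewrite /q0 /Dshift /Dpoly !comp_polyD !comp_polyC !coefD !coefC /= mulr0 addr0.
Qed.

Theorem lemma4p5 (R : rcfType) (n : nat) (c : R) (z : R[i]) :
  (0 < n)%N ->
  root (Dpoly n (c%:C)%C) z ->
  complex.Re z = - 2%:R^-1 ->
  \det (H2n n c) = 0 /\ (c = (-1) ^+ n.-1 * q0 R n \/ hn1 n c = 0).
Proof.
move=> n0 hr hre.
have [hE hO] := @root_eval R n c z hr hre.
move: hE hO; set y := complex.Im z; set t := - (y * y) => hE hO.
have hO' : t * Od n c t = 0 by rewrite /t mulNr -mulrA hO mulr0 oppr0.
split; first exact: (@detH_zero R n c n0 t hE hO').
have [t0|t0] := eqVneq t 0; last by right; exact: (@hn1_zero R n c n0 t t0 hE hO').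
left; move: hE; rewrite t0 /Ev big_ord_recl big1; last first.
  by move=> k _; rewrite expr0n /= mulr0.
rewrite addr0 expr0 mulr1 (hcoef_coef _ n c 0) Dshift_coef0 => h.
have hs : (-1) ^+ n = - (-1) ^+ n.-1 :> R by rewrite -{1}(prednK n0) exprS mulN1r.
have hss : (-1) ^+ n.-1 * (-1) ^+ n.-1 = 1 :> R.
  by rewrite -exprD addnn -mul2n exprM sqrrN expr1n expr1n.
move: h; rewrite hs mulNr => /eqP; rewrite subr_eq0 => /eqP ->.
by rewrite mulrA hss mul1r.
Qed.
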